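(* For every integer $\ell\geq 3$, $$\mathfrak K(3\cdot 2^{\ell-2}+1)>\frac{5\cdot 2^{2\ell-3}}{3\cdot 2^{\ell-2}+1}\qquad\text{and}\qquad \mathfrak K(2^{\ell-1}+3)>\frac{2^{2\ell-2}}{2^{\ell-1}+3}.$$
   Context: The Thue–Morse word is $\mathbf t=\mathbf t_1\mathbf t_2\cdots$ where $\mathbf t_i\in\{0,1\}$ has the parity of the number of $1$'s in the binary expansion of $i-1$. For positive integers $\alpha\le\beta$, $\langle\alpha,\beta\rangle=\mathbf t_\alpha\cdots\mathbf t_\beta$. A $k$-anti-power is a word $w_1\cdots w_k$ with $w_1,\dots,w_k$ pairwise distinct words of equal length. For a positive integer $m$, $\mathfrak K(m)$ is the smallest positive integer $k$ such that the prefix $\langle 1,km\rangle$ of $\mathbf t$ is not a $k$-anti-power. *)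

(* Defs.v *)
From mathcomp Require Import all_boot.
Set Implicit Arguments. Unset Strict Implicit. Unset Printing Implicit Defensive.

Fixpoint popcount_aux (fuel n : nat) : nat :=
  match fuel with
  | 0 => 0
  | f.+1 => if n is 0 then 0 else odd n + popcount_aux f n./2
  end.
Definition popcount (n : nat) : nat := popcount_aux n n.

(* Thue-Morse word, 1-indexed: t_i = parity of popcount (i-1) *)
Definition tm (i : nat) : bool := odd (popcount i.-1).

Definition tm_factor (alpha beta : nat) : seq bool :=
  [seq tm i | i <- iota alpha (beta.+1 - alpha)].

Definition anti_power (k : nat) (w : seq bool) : bool :=
  (0 < k) && (k %| size w) &&
  uniq [seq take (size w %/ k) (drop (j * (size w %/ k)) w) | j <- iota 0 k].

Definition is_frakK (m k : nat) : Prop :=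
  0 < k /\ ~~ anti_power k (tm_factor 1 (k * m)) /\
  forall k', 0 < k' < k -> anti_power k' (tm_factor 1 (k' * m)).

Goal [seq tm i | i <- iota 1 8] = [:: false; true; true; false; true; false; false; true]. by []. Qed.
Goal anti_power 2 [:: false; true; true; false]. by []. Qed.
Goal ~~ anti_power 2 [:: false; true; false; true]. by []. Qed.

(* Main.v *)
Require Import Defs.
From mathcomp Require Import all_boot zify.

Definition tw (n : nat) : bool := odd (popcount n).

Lemma pa_S f n : popcount_aux f.+1 n = if n is 0 then 0 else odd n + popcount_aux f n./2.
Proof. by []. Qed.

Lemma pa_stable f n : n <= f -> popcount_aux f.+1 n = popcount_aux f n.
Proof.
elim: f n => [|f IH] n hn; first by move: hn; rewrite leqn0 => /eqP ->.
case: n hn => [|n] hn //. rewrite (pa_S f.+1 n.+1) (pa_S f n.+1).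
rewrite IH //.
have : n.+1./2 <= n by rewrite -divn2; lia.
lia.
Qed.

Lemma pa_any f n : n <= f -> popcount_aux f n = popcount n.
Proof.
move=> h; rewrite /popcount; elim: f h => [|f IH] h.
  by move: h; rewrite leqn0 => /eqP ->.
case: (ltngtP n f.+1) => [lt|//|eq]; last by rewrite eq.
  by rewrite pa_stable ?IH //; lia.
lia.
Qed.

Lemma popcount_step n : popcount (odd n + n./2.*2) = odd n + popcount n./2.
Proof.
rewrite odd_double_half.
case: n => [|n] //.
rewrite /popcount /=.
rewrite pa_any //.
by rewrite leq_uphalf_double -addnn leq_addr.
Qed.

Lemma tt_db (b : bool) n : tw (b + n.*2) = b (+) tw n.
Proof.
have e: (b + n.*2)./2 = n by case: b; rewrite /= ?add0n ?doubleK ?uphalf_double.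
have o: odd (b + n.*2) = b by rewrite oddD odd_double addbF; case: (b).
rewrite /tw -{1}(odd_double_half (b + n.*2)) popcount_step e o oddD; by case: (b).
Qed.

Lemma tt2 n : tw (2 * n) = tw n.
Proof. by have := tt_db false n; rewrite /= add0n mul2n => ->. Qed.
Lemma tt21 n : tw (2 * n + 1) = ~~ tw n.
Proof. by have := tt_db true n; rewrite /= mul2n addnC => ->. Qed.

Lemma tt0 : tw 0 = false. Proof. by []. Qed.

Lemma tt_split s a b : b < 2 ^ s -> tw (2 ^ s * a + b) = tw a (+) tw b.
Proof.
elim: s a b => [|s IH] a b hb.
  by move: hb; rewrite expn0 ltnS leqn0 => /eqP ->; rewrite mul1n addn0 tt0 addbF.
have hb2 : b./2 < 2 ^ s by move: hb; rewrite expnS; rewrite -divn2 ltn_divLR //; lia.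
have -> : 2 ^ s.+1 * a + b = odd b + (2 ^ s * a + b./2).*2.
  rewrite -{1}(odd_double_half b) expnS; rewrite -!mul2n; lia.
rewrite tt_db IH // -[in RHS](odd_double_half b) tt_db.
by case: (odd b); case: (tw a); case: (tw b./2).
Qed.

Lemma tt_pow s b : b < 2 ^ s -> tw (2 ^ s + b) = ~~ tw b.
Proof. by move=> h; rewrite -{1}(muln1 (2^s)) tt_split. Qed.

Lemma eo_split n : exists c, n = 2 * c \/ n = 2 * c + 1.
Proof. exists n./2; rewrite -divn2; lia. Qed.

Lemma no_cube b : ~ (tw b = tw b.+1 /\ tw b.+1 = tw b.+2).
Proof.
have [c [->|->]] := eo_split b.
- have -> : (2 * c).+1 = 2 * c + 1 by lia.
  rewrite tt21 tt2; case: (tw c) => -[]//.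
- have -> : (2 * c + 1).+1 = 2 * c.+1 by lia.
  have -> : (2 * c.+1).+1 = 2 * c.+1 + 1 by lia.
  rewrite !tt2 !tt21; case: (tw c); case: (tw c.+1) => //= -[]//.
Qed.

Lemma no_sq2 u : ~ (forall c, c < 4 -> tw (u + c) = tw (u + c + 2)).
Proof.
move=> H.
have e0 := H 0 erefl; have e1 := H 1 erefl; have e2 := H 2 erefl; have e3 := H 3 erefl.
have [c [ec|ec]] := eo_split u; subst u.
- have a1 : 2 * c + 0 = 2 * c by lia.
  have a2 : 2 * c + 0 + 2 = 2 * c.+1 by lia.
  have a3 : 2 * c + 2 + 2 = 2 * c.+2 by lia.
  have a4 : 2 * c + 2 = 2 * c.+1 by lia.
  rewrite a2 a1 in e0; rewrite a3 a4 in e2.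
  rewrite !tt2 in e0 e2.
  by apply: (no_cube c); rewrite e0 e2.
- have a1 : 2 * c + 1 + 1 = 2 * c.+1 by lia.
  have a2 : 2 * c + 1 + 1 + 2 = 2 * c.+2 by lia.
  have a3 : 2 * c + 1 + 3 + 2 = 2 * c.+3 by lia.
  have a4 : 2 * c + 1 + 3 = 2 * c.+2 by lia.
  rewrite a2 a1 in e1; rewrite a3 a4 in e3.
  rewrite !tt2 in e1 e3.
  by apply: (no_cube c.+1); rewrite e1 e3.
Qed.

Lemma no_anti3 u : ~ (forall c, c < 3 -> tw (u + c) != tw (u + c + 3)).
Proof.
move=> H.
pose g k := tw (u + k).
have cg k : ~ (g k = g k.+1 /\ g k.+1 = g k.+2) by rewrite /g !addnS; exact: no_cube.
have sg : ~ (forall c, c < 4 -> g c = g c.+2).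
  by move=> h; apply: (no_sq2 u) => c hc; rewrite -addnA addn2; exact: h.
have hg c : c < 3 -> g c.+3 = ~~ g c.
  move=> hc; move: (H c hc); rewrite -addnA addn3 /g.
  by case: (tw (u + c)); case: (tw (u + c.+3)).
have h0 := hg 0 erefl; have h1 := hg 1 erefl; have h2 := hg 2 erefl.
have c0 := cg 0; have c1 := cg 1; have c2 := cg 2; have c3 := cg 3.
apply: sg => c hc.
case: c hc => [|[|[|[|]]]] // _;
move: h0 h1 h2 c0 c1 c2 c3;
case E0: (g 0); case E1: (g 1); case E2: (g 2) => -> -> -> //=; try by move=> *; intuition.
Qed.

Lemma oe n : odd (2 * n) = false. Proof. by rewrite mul2n odd_double. Qed.
Lemma oo n : odd (2 * n + 1) = true. Proof. by rewrite addn1 /= oe. Qed.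

Lemma parity_eq p q L : 3 < L -> (forall x, x < L -> tw (p + x) = tw (q + x)) ->
  odd p = odd q.
Proof.
move=> hL H.
have H0 := H 0 ltac:(lia); have H1 := H 1 ltac:(lia);
have H2 := H 2 ltac:(lia); have H3 := H 3 ltac:(lia).
have [a [ep | ep]] := eo_split p; have [b [eq | eq]] := eo_split q;
subst p q; rewrite ?oe ?oo //.
- rewrite (_ : 2 * a + 0 = 2 * a) ?tt2 in H0; last lia.
  rewrite (_ : 2 * b + 1 + 0 = 2 * b + 1) ?tt21 in H0; last lia.
  rewrite tt21 in H1.
  rewrite (_ : 2 * b + 1 + 1 = 2 * b.+1) ?tt2 in H1; last lia.
  rewrite (_ : 2 * a + 2 = 2 * a.+1) ?tt2 in H2; last lia.
  rewrite (_ : 2 * b + 1 + 2 = 2 * b.+1 + 1) ?tt21 in H2; last lia.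
  rewrite (_ : 2 * a + 3 = 2 * a.+1 + 1) ?tt21 in H3; last lia.
  rewrite (_ : 2 * b + 1 + 3 = 2 * b.+2) ?tt2 in H3; last lia.
  exfalso; apply: (no_cube b).
  move: H0 H1 H2 H3; case: (tw a); case: (tw a.+1); case: (tw b); case: (tw b.+1);
    case: (tw b.+2) => //.
- rewrite (_ : 2 * b + 0 = 2 * b) ?tt2 in H0; last lia.
  rewrite (_ : 2 * a + 1 + 0 = 2 * a + 1) ?tt21 in H0; last lia.
  rewrite tt21 in H1.
  rewrite (_ : 2 * a + 1 + 1 = 2 * a.+1) ?tt2 in H1; last lia.
  rewrite (_ : 2 * b + 2 = 2 * b.+1) ?tt2 in H2; last lia.
  rewrite (_ : 2 * a + 1 + 2 = 2 * a.+1 + 1) ?tt21 in H2; last lia.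
  rewrite (_ : 2 * b + 3 = 2 * b.+1 + 1) ?tt21 in H3; last lia.
  rewrite (_ : 2 * a + 1 + 3 = 2 * a.+2) ?tt2 in H3; last lia.
  exfalso; apply: (no_cube a).
  move: H0 H1 H2 H3; case: (tw a); case: (tw a.+1); case: (tw b); case: (tw b.+1);
    case: (tw a.+2) => //.
Qed.

Lemma sync k : forall p q L, p <= q -> 3 * 2 ^ k < L ->
  (forall x, x < L -> tw (p + x) = tw (q + x)) -> 2 ^ k.+1 %| q - p.
Proof.
elim: k => [|k IH] p q L hpq hL H.
  rewrite expn0 in hL; have hL3 : 3 < L by lia.
  have e := parity_eq _ _ _ hL3 H.
  by rewrite expn1 dvdn2 oddB // e addbb.
have hP : 0 < 2 ^ k by rewrite expn_gt0.
have hL' : 3 < L by rewrite expnS in hL; lia.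
have e := parity_eq _ _ _ hL' H.
have [a [ep | ep]] := eo_split p; have [b [eq | eq]] := eo_split q;
subst p q; rewrite ?oe ?oo // in e.
- have hab : a <= b by lia.
  have := IH a b ((L + 1) %/ 2) hab ltac:(rewrite expnS in hL; lia).
  have -> : 2 * b - 2 * a = 2 * (b - a) by lia.
  rewrite (expnS 2 k.+1) dvdn_pmul2l //; apply.
  move=> y hy; have := H (2 * y) ltac:(lia).
  by rewrite -!mulnDr !tt2.
- have hab : a <= b by lia.
  have := IH a b (L %/ 2 + 1) hab ltac:(rewrite expnS in hL; lia).
  have -> : 2 * b + 1 - (2 * a + 1) = 2 * (b - a) by lia.
  rewrite (expnS 2 k.+1) dvdn_pmul2l //; apply.
  move=> [|y] hy.
    have := H 0 ltac:(lia); rewrite !addn0 !tt21.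
    by case: (tw a); case: (tw b).
  have := H (2 * y + 1) ltac:(lia).
  rewrite (_ : 2 * a + 1 + (2 * y + 1) = 2 * (a + y.+1)); last lia.
  rewrite (_ : 2 * b + 1 + (2 * y + 1) = 2 * (b + y.+1)); last lia.
  by rewrite !tt2.
Qed.

Definition blk m j := map tw (iota (j * m) m).

Lemma tm_factor_eq n : tm_factor 1 n = map tw (iota 0 n).
Proof.
rewrite /tm_factor subSS subn0 -[1]addn0 iotaDl -map_comp.
by apply: eq_map => i /=; rewrite /tm add1n.
Qed.

Lemma ap_iff k m : 0 < k ->
  anti_power k (tm_factor 1 (k * m)) = uniq (map (blk m) (iota 0 k)).
Proof.
move=> hk; rewrite /anti_power tm_factor_eq size_map size_iota mulKn // dvdn_mulr // hk /=.
congr uniq; apply/eq_in_map => j; rewrite mem_iota => /andP [_ hj].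
rewrite /blk -map_drop -map_take drop_iota take_iota add0n.
rewrite (minn_idPl _) //.
have : j.+1 <= k by rewrite add0n in hj.
nia.
Qed.

Lemma blk_eq m i j : blk m i = blk m j <-> forall x, x < m -> tw (i * m + x) = tw (j * m + x).
Proof.
split.
  move=> e x hx; have := congr1 (nth false ^~ x) e.
  by rewrite /= !(nth_map 0) ?size_iota // !nth_iota.
move=> H; apply: (eq_from_nth (x0 := false)); first by rewrite !size_map !size_iota.
move=> x; rewrite size_map size_iota => hx.
by rewrite !(nth_map 0) ?size_iota // !nth_iota // H.
Qed.

Lemma frakK_of (m B : nat) : 0 < m ->
  (exists i j, i < j /\ forall x, x < m -> tw (i * m + x) = tw (j * m + x)) ->
  (forall i j, i < j -> (j + 1) * m <= B ->
     ~ (forall x, x < m -> tw (i * m + x) = tw (j * m + x))) ->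
  exists K, is_frakK m K /\ B < K * m.
Proof.
move=> hm [i0 [j0 [lt0 e0]]] H2.
pose Q k := (0 < k) && ~~ anti_power k (tm_factor 1 (k * m)).
have ex : exists k, Q k.
  exists j0.+1; rewrite /Q ap_iff // ltn0Sn andTb; apply/(uniqPn [::]); exists i0, j0.
  rewrite size_map size_iota; split => //.
  rewrite !(nth_map 0) ?size_iota ?nth_iota //; try lia. by rewrite !add0n; apply/blk_eq.
case: (ex_minnP ex) => K QK minK; exists K.
move/andP: QK => [K0 nap].
split.
  split => //; split => // k' /andP [k0 lt].
  apply/negPn/negP => nk.
  have := minK k'; rewrite /Q k0 nk => /(_ isT); lia.
rewrite ltnNge; apply/negP => hB.
move: nap; rewrite ap_iff // => /(uniqPn [::]) [i [j [lij ljK e]]].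
rewrite size_map size_iota in ljK.
rewrite !(nth_map 0) ?size_iota ?nth_iota // in e; try lia.
apply: (H2 i j lij _ (proj1 (blk_eq _ _ _) e)).
apply: leq_trans hB; apply: leq_mul => //; lia.
Qed.

Lemma decomp P s m y : P = 2 ^ s ->
  tw (y + P * m) = tw y (+) tw (y %/ P) (+) tw (y %/ P + m).
Proof.
move=> eP.
have P0 : 0 < P by rewrite eP expn_gt0.
have er : y %% P < P by rewrite ltn_pmod.
have ey : y = P * (y %/ P) + y %% P by rewrite mulnC -divn_eq.
set q := y %/ P; set r := y %% P in er ey *.
have e2 : y + P * m = P * (q + m) + r by rewrite ey; lia.
rewrite e2 {1}ey eP !tt_split -?eP //.
by case: (tw q); case: (tw r); case: (tw (q + m)).
Qed.

Lemma tw1 : tw 1 = true. Proof. by []. Qed.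
Lemma tw2 : tw 2 = true. Proof. by []. Qed.

Lemma tw3N r w : w < 2 * 2 ^ r -> tw (3 * 2 ^ r + w) = tw w.
Proof.
move=> hw.
have hN : 0 < 2 ^ r by rewrite expn_gt0.
case: (ltnP w (2 ^ r)) => h.
  have -> : 3 * 2 ^ r + w = 2 ^ r.+1 * 1 + (2 ^ r + w) by rewrite expnS; lia.
  rewrite tt_split; last by rewrite expnS; lia.
  by rewrite tw1 tt_pow //; case: (tw w).
have -> : 3 * 2 ^ r + w = 2 ^ r.+1 * 2 + (w - 2 ^ r) by rewrite expnS; lia.
rewrite tt_split; last by rewrite expnS; lia.
rewrite -[w in RHS](subnKC h) tt_pow; last lia.
by rewrite tw2.
Qed.

Lemma blk_shift P s m a x : P = 2 ^ s -> x < m ->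
  tw (a + x) = tw (a + x + P * m) -> tw ((a + x) %/ P) = tw ((a + x) %/ P + m).
Proof.
move=> eP hx; rewrite (decomp _ _ _ _ eP).
by case: (tw (a + x)); case: (tw ((a + x) %/ P)); case: (tw ((a + x) %/ P + m)).
Qed.

Lemma blk_shift_inv P s m a x : P = 2 ^ s ->
  tw ((a + x) %/ P) = tw ((a + x) %/ P + m) -> tw (a + x) = tw (a + x + P * m).
Proof.
move=> eP e; rewrite (decomp _ _ _ _ eP) e.
by case: (tw (a + x)); case: (tw ((a + x) %/ P + m)).
Qed.

Lemma odd_m1 r N : 1 <= r -> N = 2 ^ r -> odd (3 * N + 1).
Proof.
move=> hr eN; have -> : 3 * N + 1 = 2 * (3 * 2 ^ r.-1) + 1.
  by rewrite eN -(prednK hr) expnS /=; lia.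
by rewrite oo.
Qed.

Lemma part1_low r N i j : 3 <= r -> N = 2 ^ r -> i < j ->
  (j + 1) * (3 * N + 1) <= 10 * N * N ->
  ~ (forall x, x < 3 * N + 1 -> tw (i * (3 * N + 1) + x) = tw (j * (3 * N + 1) + x)).
Proof.
move=> hr eN lij hB H.
have N8 : 8 <= N by rewrite eN (_ : 8 = 2 ^ 3) // leq_pexp2l.
set m := 3 * N + 1 in hB H.
have hm : 3 * 2 ^ r < m by rewrite /m -eN; lia.
have hs := sync r (i * m) (j * m) m (leq_mul (ltnW lij) (leqnn m)) hm H.
rewrite -mulnBl Gauss_dvdl in hs; last first.
  by apply: coprimeXl; rewrite coprime2n; apply: (odd_m1 r) => //; lia.
rewrite expnS -eN in hs.
have jN : j < 4 * N by nia.
case/dvdnP: hs => c hc.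
have ec : c = 1 by nia.
subst c; rewrite mul1n in hc.
have ej : j = i + 2 * N by lia.
set a := i * m.
have E x : x < m -> tw ((a + x) %/ (2 * N)) = tw ((a + x) %/ (2 * N) + m).
  move=> hx; apply: (blk_shift _ r.+1); first by rewrite expnS eN.
    exact: hx.
  rewrite (H x hx) ej; congr tw; rewrite /a; lia.
have N0 : 0 < 2 * N by lia.
set q0 := a %/ (2 * N).
have hq0 : q0 * (2 * N) <= a by rewrite leq_divM.
have hq : q0 + 2 < 2 * N by rewrite /a in hq0; nia.
have E0 := E 0 ltac:(lia); rewrite addn0 -/q0 in E0.
have hx1 : 2 * N - a %% (2 * N) < m by rewrite /m; lia.
have E1 := E _ hx1.
have e1 : (a + (2 * N - a %% (2 * N))) %/ (2 * N) = q0.+1.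
  have ea : a = q0 * (2 * N) + a %% (2 * N) by rewrite /q0 -divn_eq.
  have lt : a %% (2 * N) < 2 * N by rewrite ltn_pmod.
  rewrite {1}ea (_ : q0 * (2 * N) + a %% (2 * N) + (2 * N - a %% (2 * N)) = q0.+1 * (2 * N)).
    by rewrite mulnK.
  lia.
rewrite e1 in E1.
have T k : k + 1 < 2 * N -> tw (k + m) = tw k.+1.
  move=> hk; rewrite /m (_ : k + (3 * N + 1) = 3 * 2 ^ r + k.+1); last by rewrite -eN; lia.
  by rewrite tw3N // -eN; lia.
rewrite T in E0; last lia.
rewrite T in E1; last lia.
by apply: (no_cube q0).
Qed.

Lemma three_div r : exists i, 3 * i = 4 * 2 ^ r + 4 \/ 3 * i = 4 * 2 ^ r + 5.
Proof.
elim: r => [|r [i [h|h]]]; first by exists 3; right.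
- exists (2 * i - 1); right; rewrite expnS; lia.
- exists (2 * i - 2); left; rewrite expnS; lia.
Qed.

Lemma part1_ex r N : 3 <= r -> N = 2 ^ r ->
  exists i j, i < j /\ forall x, x < 3 * N + 1 ->
    tw (i * (3 * N + 1) + x) = tw (j * (3 * N + 1) + x).
Proof.
move=> hr eN.
have N8 : 8 <= N by rewrite eN (_ : 8 = 2 ^ 3) // leq_pexp2l.
have [i hi] := three_div r; rewrite -eN in hi.
exists i, (i + 2 * N); split; first lia.
set m := 3 * N + 1 => x hx.
have eP : 2 * N = 2 ^ r.+1 by rewrite expnS eN.
rewrite (_ : (i + 2 * N) * m + x = i * m + x + 2 * N * m); last lia.
apply: (blk_shift_inv _ r.+1) => //.
have N0 : 0 < 2 * N by lia.
set y := i * m + x.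
set q := y %/ (2 * N).
have hq1 : q * (2 * N) <= y by rewrite leq_divM.
have hq2 : y < (q + 1) * (2 * N).
  have := ltn_pmod y N0; have := divn_eq y (2 * N); rewrite -/q; lia.
have e3 : 3 * (i * m) = 12 * (N * N) + 16 * N + 4 \/
          3 * (i * m) = 12 * (N * N) + 19 * N + 5.
  rewrite mulnA /m; case: hi => ->; [left|right]; nia.
have eNN : 2 * N * (2 * N + 2) = 4 * (N * N) + 4 * N by nia.
have eNN' : 2 * N * (2 * N + 5) = 4 * (N * N) + 10 * N by nia.
have hy1 : 2 * N * (2 * N + 2) <= y by rewrite /y eNN; lia.
have hy2 : y < 2 * N * (2 * N + 5) by rewrite /y eNN'; lia.
have hql : 2 * N + 2 <= q.
  have : (2 * N + 2) * (2 * N) < (q + 1) * (2 * N).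
    by rewrite mulnC; exact: leq_ltn_trans hy1 hq2.
  by rewrite ltn_pmul2r //; lia.
have hqu : q <= 2 * N + 4.
  have : q * (2 * N) < (2 * N + 5) * (2 * N).
    by rewrite [X in _ < X]mulnC; exact: leq_ltn_trans hq1 hy2.
  by rewrite ltn_pmul2r //; lia.
have A v : v < 2 * N -> tw (2 * N + v) = ~~ tw v by move=> hv; rewrite eP tt_pow // -eP.
have B v : v + 1 < N -> tw (2 * N + v + m) = tw v.+1.
  move=> hv; rewrite (_ : 2 * N + v + m = 2 ^ r.+2 + (2 ^ r + v.+1)).
    rewrite tt_pow; last by rewrite !expnS -eN; lia.
    by rewrite tt_pow ?negbK // -eN; lia.
  by rewrite !expnS -eN /m; lia.
have : q = 2 * N + 2 \/ q = 2 * N + 3 \/ q = 2 * N + 4 by lia.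
case=> [->|[->|->]]; rewrite A ?B //; lia.
Qed.

Lemma part2_low r N i j : 4 <= r -> N = 2 ^ r -> i < j ->
  (j + 1) * (2 * N + 3) <= 4 * N * N ->
  ~ (forall x, x < 2 * N + 3 -> tw (i * (2 * N + 3) + x) = tw (j * (2 * N + 3) + x)).
Proof.
move=> hr eN lij hB H.
have N16 : 16 <= N by rewrite eN (_ : 16 = 2 ^ 4) // leq_pexp2l.
set m := 2 * N + 3 in hB H.
have es : N = 2 * 2 ^ r.-1 by rewrite eN -(prednK (ltn_trans _ hr)) // expnS.
have hm : 3 * 2 ^ r.-1 < m by rewrite /m; lia.
have hs := sync r.-1 (i * m) (j * m) m (leq_mul (ltnW lij) (leqnn m)) hm H.
rewrite -mulnBl Gauss_dvdl in hs; last first.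
  apply: coprimeXl; rewrite coprime2n /m (_ : 2 * N + 3 = 2 * (N + 1) + 1); last lia.
  by rewrite oo.
rewrite (prednK (ltn_trans _ hr)) // -eN in hs.
have jN : j < 2 * N by nia.
case/dvdnP: hs => c hc.
have ec : c = 1 by nia.
subst c; rewrite mul1n in hc.
have ej : j = i + N by lia.
set a := i * m.
have E x : x < m -> tw ((a + x) %/ N) = tw ((a + x) %/ N + m).
  move=> hx; apply: (blk_shift _ r); first exact: eN.
    exact: hx.
  rewrite (H x hx) ej; congr tw; rewrite /a; lia.
have N0 : 0 < N by lia.
set q0 := a %/ N.
have hq0 : q0 * N <= a by rewrite leq_divM.
have hq : q0 + 5 < 2 * N by rewrite /a in hq0; nia.
have ea : a = q0 * N + a %% N by rewrite /q0 -divn_eq.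
have lt : a %% N < N by rewrite ltn_pmod.
have Ek1 k : 0 < k < 3 -> tw (q0 + k) = tw (q0 + k + m).
  move=> hk.
  have hxk : k * N - a %% N < m by case/andP: hk => _; rewrite /m; case: k => [|[|[|]]] //; lia.
  have := E _ hxk.
  rewrite (_ : (a + (k * N - a %% N)) %/ N = q0 + k) //.
  rewrite {1}ea (_ : q0 * N + a %% N + (k * N - a %% N) = (q0 + k) * N).
    by rewrite mulnK.
  move: hxk; case/andP: hk; case: k => [|[|[|k]]] // _ _ _; rewrite mulnDl; lia.
have Ek k : k < 3 -> tw (q0 + k) = tw (q0 + k + m).
  case: k => [|k] hk; last by apply: Ek1; lia.
  by have := E 0 ltac:(lia); rewrite !addn0.
have T k : k + 3 < 2 * N -> tw (k + m) = ~~ tw (k + 3).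
  move=> hk; rewrite /m (_ : k + (2 * N + 3) = 2 ^ r.+1 + (k + 3)); last by rewrite expnS -eN; lia.
  by rewrite tt_pow // expnS -eN.
apply: (no_anti3 q0) => k hk.
rewrite (Ek k hk) T; last lia.
by case: (tw _).
Qed.

Lemma part2_ex r N : 4 <= r -> N = 2 ^ r ->
  exists i j, i < j /\ forall x, x < 2 * N + 3 ->
    tw (i * (2 * N + 3) + x) = tw (j * (2 * N + 3) + x).
Proof.
move=> hr eN.
have N16 : 16 <= N by rewrite eN (_ : 16 = 2 ^ 4) // leq_pexp2l.
exists (N + 4), (2 * N + 4); split; first lia.
set m := 2 * N + 3 => x hx.
rewrite (_ : (2 * N + 4) * m + x = (N + 4) * m + x + N * m); last lia.
apply: (blk_shift_inv _ r) => //.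
have N0 : 0 < N by lia.
set y := (N + 4) * m + x.
set q := y %/ N.
have hq1 : q * N <= y by rewrite leq_divM.
have hq2 : y < (q + 1) * N.
  have := ltn_pmod y N0; have := divn_eq y N; rewrite -/q; lia.
have ey : (N + 4) * m = 2 * (N * N) + 11 * N + 12 by rewrite /m; nia.
have hy1 : (2 * N + 11) * N <= y by rewrite /y ey; nia.
have hy2 : y < (2 * N + 14) * N by rewrite /y ey; nia.
have hql : 2 * N + 11 <= q.
  have : (2 * N + 11) * N < (q + 1) * N by exact: leq_ltn_trans hy1 hq2.
  by rewrite ltn_pmul2r //; lia.
have hqu : q <= 2 * N + 13.
  have : q * N < (2 * N + 14) * N by exact: leq_ltn_trans hq1 hy2.
  by rewrite ltn_pmul2r //; lia.
have A v : v < 2 * N -> tw (2 * N + v) = ~~ tw v.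
  by move=> hv; rewrite (_ : 2 * N = 2 ^ r.+1) ?tt_pow // ?expnS -?eN //; rewrite expnS -eN.
have B v : v + 3 < 4 * N -> tw (2 * N + v + m) = ~~ tw (v + 3).
  move=> hv; rewrite (_ : 2 * N + v + m = 2 ^ r.+2 + (v + 3)).
    by rewrite tt_pow // !expnS -eN; lia.
  by rewrite !expnS -eN /m; lia.
have : q = 2 * N + 11 \/ q = 2 * N + 12 \/ q = 2 * N + 13 by lia.
case=> [->|[->|->]]; rewrite A ?B //; lia.
Qed.

Lemma small_frak m K : 0 < K -> ~~ anti_power K (tm_factor 1 (K * m)) ->
  all (fun k => anti_power k (tm_factor 1 (k * m))) (iota 1 K.-1) -> is_frakK m K.
Proof.
move=> K0 nap /allP al; split => //; split => // k /andP [k0 kK].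
apply: al; rewrite mem_iota; lia.
Qed.

Theorem lemma9 (l : nat) (hl : 3 <= l) :
  (exists K, is_frakK (3 * 2 ^ (l - 2) + 1) K /\
             5 * 2 ^ (2 * l - 3) < K * (3 * 2 ^ (l - 2) + 1)) /\
  (exists K, is_frakK (2 ^ (l - 1) + 3) K /\
             2 ^ (2 * l - 2) < K * (2 ^ (l - 1) + 3)).
Proof.
case: (ltnP l 6) => hl6.
  have : l = 3 \/ l = 4 \/ l = 5 by lia.
  case=> [->|[->|->]]; split.
  - by exists 7; split => //; apply: small_frak; vm_compute.
  - by exists 7; split => //; apply: small_frak; vm_compute.
  - by exists 27; split => //; apply: small_frak; vm_compute.
  - by exists 15; split => //; apply: small_frak; vm_compute.
  - by exists 29; split => //; apply: small_frak; vm_compute.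
  - by exists 26; split => //; apply: small_frak; vm_compute.
set r := l - 2.
have hr : 4 <= r by rewrite /r; lia.
set N := 2 ^ r.
have eN : N = 2 ^ r by [].
have el : l = r.+2 by rewrite /r; lia.
split.
- have -> : 5 * 2 ^ (2 * l - 3) = 10 * N * N.
    by rewrite el (_ : 2 * r.+2 - 3 = (r + r).+1); [rewrite expnS expnD -eN; lia | lia].
  apply: frakK_of; first lia.
    by apply: (part1_ex r) => //; lia.
  move=> i j lij hB; apply: (part1_low r) => //; lia.
- have -> : 2 ^ (l - 1) = 2 * N by rewrite el (_ : r.+2 - 1 = r.+1) ?expnS //; lia.
  have -> : 2 ^ (2 * l - 2) = 4 * N * N.
    by rewrite el (_ : 2 * r.+2 - 2 = (r + r).+2); [rewrite !expnS expnD -eN; lia | lia].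
  apply: frakK_of; first lia.
    by apply: (part2_ex r).
  move=> i j lij hB; apply: (part2_low r) => //.
Qed.
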